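(* Let $n,t$ be nonnegative integers with $n\ge 3t+1$, let $\mathcal S_1=\{1,\dots,n\}$ be the set of all nodes, and let $\mathcal F\subseteq \mathcal S_1$ be the set of dishonest nodes with $|\mathcal F|\le t$. Define a family of sets $(\mathcal S_g)_{g\ge 1}$ recursively: for each $g\ge1$, $\mathcal S_g$ is partitioned into two disjoint sets $\mathcal S_{2g}$ and $\mathcal S_{2g+1}$ with $\mathcal S_g=\mathcal S_{2g}\cup\mathcal S_{2g+1}$, $|\mathcal S_{2g}|=\lfloor|\mathcal S_g|/2\rfloor$ and $|\mathcal S_{2g+1}|=\lceil|\mathcal S_g|/2\rceil$ (the choice of partition is arbitrary subject to these sizes). Then there exists a network chain with good resilience: an infinite sequence of indices $g_1=1,g_2,g_3,\dots$ with $g_{r+1}\in\{2g_r,\,2g_r+1\}$ for all $r\ge1$ such that every $\mathcal S_{g_r}$ has good resilience, i.e. $|\mathcal S_{g_r}\cap\mathcal F|<|\mathcal S_{g_r}|/3$ for all $r\ge 1$. *)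

(* Defs.v *)
From mathcomp Require Import all_boot.
Set Implicit Arguments.
Unset Strict Implicit.
Unset Printing Implicit Defensive.

(* Nodes are represented by 'I_n (i.e. 0..n-1 instead of 1..n). *)

(* S_g has good resilience: |S_g ∩ F| < |S_g| / 3, stated over nat as
   3 * |S_g ∩ F| < |S_g| (equivalent over the rationals). *)
Definition good_resilience (n : nat) (F A : {set 'I_n}) : bool :=
  3 * #|A :&: F| < #|A|.

Definition halving_family (n : nat) (S : nat -> {set 'I_n}) : Prop :=
  S 1 = [set: 'I_n] /\
  forall g, 1 <= g ->
    [/\ S (2 * g) :&: S (2 * g + 1) = set0,
        S g = S (2 * g) :|: S (2 * g + 1),
        #|S (2 * g)| = #|S g| %/ 2
      & #|S (2 * g + 1)| = (#|S g|).+1 %/ 2].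

(* Main.v *)
Require Import Defs.
From mathcomp Require Import all_boot.
From mathcomp Require Import zify.

Lemma card_disjI (n : nat) (A B F : {set 'I_n}) :
  A :&: B = set0 -> #|(A :|: B) :&: F| = #|A :&: F| + #|B :&: F|.
Proof.
move=> H; rewrite setIUl cardsU setIACA setIid H set0I cards0 subn0 //.
Qed.

Lemma child_good (n : nat) (F : {set 'I_n}) (S : nat -> {set 'I_n}) g :
  halving_family S -> 1 <= g -> good_resilience F (S g) ->
  good_resilience F (S (2 * g)) \/ good_resilience F (S (2 * g + 1)).
Proof.
move=> [_ HS] g1; have [Hd Hu _ _] := HS g g1.
rewrite /good_resilience Hu.
have E1 := @card_disjI _ _ _ F Hd.
have E2 := @card_disjI _ _ _ [set: 'I_n] Hd.
rewrite !setIT in E2.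
rewrite E1 E2.
case: (ltnP (3 * #|S (2 * g) :&: F|) #|S (2 * g)|) => h1; first by left.
case: (ltnP (3 * #|S (2 * g + 1) :&: F|) #|S (2 * g + 1)|) => h2; first by right.
lia.
Qed.

Theorem mainTheorem2 (n t : nat) (F : {set 'I_n}) (S : nat -> {set 'I_n}) :
  3 * t + 1 <= n ->
  #|F| <= t ->
  halving_family S ->
  exists gs : nat -> nat,
    [/\ gs 0 = 1,
        (forall r, gs r.+1 = 2 * gs r \/ gs r.+1 = 2 * gs r + 1)
      & forall r, good_resilience F (S (gs r))].
Proof.
move=> hn hF hS.
pose step g := if good_resilience F (S (2 * g)) then 2 * g else 2 * g + 1.
exists (fun r => iter r step 1); split => //.
  by move=> r /=; rewrite /step; case: ifP => _; [left|right].
have H : forall r, 1 <= iter r step 1 /\ good_resilience F (S (iter r step 1)).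
  elim=> [|r [IH1 IH2]] /=.
    split => //; rewrite /good_resilience (proj1 hS) setTI cardsT card_ord.
    lia.
  rewrite /step; case: ifP => h.
    by split => //; rewrite muln_gt0 IH1.
  split; first by rewrite addn1.
  by rewrite -/step in h; have [|] := @child_good _ F S _ hS IH1 IH2; [rewrite h|].
by move=> r; case: (H r).
Qed.
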